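(* Let $(X,P,o)$ be a generalized parametric metric space such that $P$ satisfies (P5) and $o$ is continuous. Then $(X,\tau_P)$ is regular: for every closed set $A\subseteq X$ and every $x\in X\setminus A$ there exist disjoint $U,V\in\tau_P$ with $x\in U$ and $A\subseteq V$.
   Context: A binary operation $o:[0,\infty)\times[0,\infty)\to[0,\infty)$ (written $\alpha\, o\, \beta$) is assumed to satisfy, for all $\alpha,\beta,\gamma\in[0,\infty)$: (a) $\alpha\, o\, 0=\alpha$; (b) $\alpha\le\beta\implies \alpha\, o\,\gamma\le\beta\, o\,\gamma$; (c) $\alpha\, o\,\gamma=\gamma\, o\,\alpha$; (d) $\alpha\, o\,(\beta\, o\,\gamma)=(\alpha\, o\,\beta)\, o\,\gamma$. It is continuous if whenever $\alpha_n\to\alpha$ and $\beta_n\to\beta$ in $[0,\infty)$ we have $\alpha_n\, o\,\beta_n\to\alpha\, o\,\beta$. A generalized parametric metric on a nonempty set $X$ is a function $P:X\times X\times(0,\infty)\to[0,\infty)$ such that: (P1) $P(a,b,t)=0$ for all $t>0$ if and only if $a=b$; (P2) $P(a,b,t)=P(b,a,t)$ for all $a,b\in X$, $t>0$; (P3) $P(a,b,s+t)\le P(a,x,s)\, o\, P(b,x,t)$ for all $s,t>0$ and $a,b,x\in X$. The triple $(X,P,o)$ is a generalized parametric metric space. Condition (P5): for all $a,b\in X$, the map $t\mapsto P(a,b,t)$ is continuous on $(0,\infty)$. Open ball: $B(a,\alpha,t)=\{b\in X: P(a,b,t)<\alpha\}$. $\tau_P$ is the topology consisting of all $A\subseteq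 X$ such that for every $a\in A$ there exist $\alpha>0,t>0$ with $B(a,\alpha,t)\subseteq A$. A sequence $\{x_n\}$ converges to $x$ if $\lim_{n\to\infty}P(x_n,x,t)=0$ for all $t>0$. A set $A\subseteq X$ is closed if whenever a sequence in $A$ converges to some $x\in X$, then $x\in A$. *)

(* Defs.v *)
From Stdlib Require Import Reals.
Open Scope R_scope.

(* A binary operation o on [0,oo), represented as o : R -> R -> R whose
   behaviour is only constrained on nonnegative arguments. *)
Definition is_binop (o : R -> R -> R) : Prop :=
  (forall a b, 0 <= a -> 0 <= b -> 0 <= o a b) /\
  (forall a, 0 <= a -> o a 0 = a) /\
  (forall a b c, 0 <= a -> a <= b -> 0 <= c -> o a c <= o b c) /\
  (forall a c, 0 <= a -> 0 <= c -> o a c = o c a) /\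
  (forall a b c, 0 <= a -> 0 <= b -> 0 <= c -> o a (o b c) = o (o a b) c).

Definition binop_continuous (o : R -> R -> R) : Prop :=
  forall (an bn : nat -> R) (a b : R),
    (forall n, 0 <= an n) -> (forall n, 0 <= bn n) -> 0 <= a -> 0 <= b ->
    Un_cv an a -> Un_cv bn b -> Un_cv (fun n => o (an n) (bn n)) (o a b).

Definition gen_param_metric {X : Type} (P : X -> X -> R -> R) (o : R -> R -> R) : Prop :=
  (forall a b t, 0 < t -> 0 <= P a b t) /\
  (forall a b, (forall t, 0 < t -> P a b t = 0) <-> a = b) /\
  (forall a b t, 0 < t -> P a b t = P b a t) /\
  (forall a b x s t, 0 < s -> 0 < t -> P a b (s + t) <= o (P a x s) (P b x t)).

Definition P5 {X : Type} (P : X -> X -> R -> R) : Prop :=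
  forall a b t, 0 < t -> continuity_pt (fun s => P a b s) t.

Definition pball {X : Type} (P : X -> X -> R -> R) (a : X) (al t : R) : X -> Prop :=
  fun b => P a b t < al.

Definition tauP_open {X : Type} (P : X -> X -> R -> R) (A : X -> Prop) : Prop :=
  forall a, A a -> exists al t, 0 < al /\ 0 < t /\ forall b, pball P a al t b -> A b.

Definition pconverges {X : Type} (P : X -> X -> R -> R) (u : nat -> X) (x : X) : Prop :=
  forall t, 0 < t -> Un_cv (fun n => P (u n) x t) 0.

Definition pclosed {X : Type} (P : X -> X -> R -> R) (A : X -> Prop) : Prop :=
  forall (u : nat -> X) (x : X), (forall n, A (u n)) -> pconverges P u x -> A x.

(* Main.v *)
Require Import Defs.
From Stdlib Require Import Reals Lra Lia ZArith Classical ClassicalEpsilon.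
Open Scope R_scope.

Lemma inv_pos_n (n : nat) : 0 < / (INR n + 1).
Proof. apply Rinv_0_lt_compat. pose proof (pos_INR n). lra. Qed.


Lemma inv_small (e : R) : 0 < e -> exists N : nat, / (INR N + 1) < e.
Proof.
  intros He. destruct (archimed (/ e)) as [H1 _].
  pose proof (Rinv_0_lt_compat e He).
  assert (Hz : (0 <= up (/ e))%Z).
  { apply le_IZR. lra. }
  exists (Z.to_nat (up (/ e))).
  rewrite INR_IZR_INZ, Z2Nat.id by exact Hz.
  assert (0 < IZR (up (/ e)) + 1) by lra.
  apply (Rmult_lt_reg_l (IZR (up (/ e)) + 1)); auto.
  rewrite Rinv_r by lra.
  apply (Rmult_lt_reg_l (/ e)); auto.
  replace (/ e * ((IZR (up (/ e)) + 1) * e)) with (IZR (up (/ e)) + 1)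
    by (field; lra).
  rewrite Rmult_1_r. lra.
Qed.

Lemma inv_mono (n N : nat) : (N <= n)%nat -> / (INR n + 1) <= / (INR N + 1).
Proof.
  intros H. apply Rinv_le_contravar.
  - pose proof (pos_INR N); lra.
  - apply le_INR in H. lra.
Qed.

Lemma cv_inv : Un_cv (fun n => / (INR n + 1)) 0.
Proof.
  intros e He. destruct (inv_small e He) as [N HN]. exists N.
  intros n Hn. unfold R_dist. rewrite Rminus_0_r.
  pose proof (inv_pos_n n). rewrite Rabs_right by lra.
  pose proof (inv_mono n N ltac:(lia)). lra.
Qed.

Section S.
Variable (X : Type) (P : X -> X -> R -> R) (o : R -> R -> R).
Hypothesis Ho : is_binop o.
Hypothesis Hoc : binop_continuous o.
Hypothesis HP : gen_param_metric P o.
Hypothesis H5 : P5 P.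

Lemma o_mono2 a b c : 0 <= a -> 0 <= b -> b <= c -> o a b <= o a c.
Proof.
  destruct Ho as (_ & _ & Hm & Hc & _). intros.
  rewrite (Hc a b), (Hc a c) by lra. apply Hm; lra.
Qed.

Lemma o_mono a b c d : 0 <= a -> a <= b -> 0 <= c -> c <= d -> o a c <= o b d.
Proof.
  destruct Ho as (_ & _ & Hm & Hc & _). intros.
  apply Rle_trans with (o b c). apply Hm; lra. apply o_mono2; lra.
Qed.

Lemma Pself b t : 0 < t -> P b b t = 0.
Proof. destruct HP as (_ & H2 & _). intros. apply (proj2 (H2 b b)); auto. Qed.

Lemma Pmono a b s t : 0 < s -> s <= t -> P a b t <= P a b s.
Proof.
  destruct HP as (H1 & _ & _ & H4). destruct Ho as (_ & Ho0 & _).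
  intros Hs Hst. destruct (Req_dec s t) as [->|Hne]; [lra|].
  replace t with (s + (t - s)) by ring.
  eapply Rle_trans. apply (H4 a b b s (t - s)); lra.
  rewrite Pself by lra. rewrite Ho0 by (apply H1; lra). lra.
Qed.

Lemma small_eta e : 0 < e -> exists eta, 0 < eta /\ o eta eta < e.
Proof.
  destruct Ho as (_ & Ho0 & _). intros He.
  assert (Hcv := Hoc (fun n => / (INR n + 1)) (fun n => / (INR n + 1)) 0 0
     (fun n => Rlt_le _ _ (inv_pos_n n)) (fun n => Rlt_le _ _ (inv_pos_n n))
     (Rle_refl 0) (Rle_refl 0) cv_inv cv_inv).
  rewrite Ho0 in Hcv by lra.
  destruct (Hcv e He) as [N HN]. exists (/ (INR N + 1)). split. apply inv_pos_n.
  specialize (HN N (Nat.le_refl N)). unfold R_dist in HN. rewrite Rminus_0_r in HN.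
  pose proof (Rle_abs (o (/ (INR N + 1)) (/ (INR N + 1)))). lra.
Qed.

Lemma small_beta p al : 0 <= p -> p < al -> exists be, 0 < be /\ o p be < al.
Proof.
  destruct Ho as (_ & Ho0 & _). intros Hp Hal.
  assert (Hc : Un_cv (fun _ : nat => p) p).
  { intros e He. exists 0%nat. intros. unfold R_dist. rewrite Rminus_diag, Rabs_R0. lra. }
  assert (Hcv := Hoc (fun _ => p) (fun n => / (INR n + 1)) p 0
     (fun n => Hp) (fun n => Rlt_le _ _ (inv_pos_n n))
     Hp (Rle_refl 0) Hc cv_inv).
  rewrite Ho0 in Hcv by lra.
  destruct (Hcv (al - p) ltac:(lra)) as [N HN]. exists (/ (INR N + 1)). split. apply inv_pos_n.
  specialize (HN N (Nat.le_refl N)). unfold R_dist in HN.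
  pose proof (Rle_abs (o p (/ (INR N + 1)) - p)). lra.
Qed.

Lemma ball_open a b al t : 0 < t -> P a b t < al ->
  exists be s, 0 < be /\ 0 < s /\ forall c, P b c s < be -> P a c t < al.
Proof.
  destruct HP as (H1 & _ & H3 & H4).
  intros Ht Hab.
  destruct (H5 a b t Ht (al - P a b t) ltac:(lra)) as [d [Hd Hcont]].
  set (t' := Rmax (t / 2) (t - d / 2)).
  assert (Ht'1 : t / 2 <= t') by apply Rmax_l.
  assert (Ht'2 : t - d / 2 <= t') by apply Rmax_r.
  assert (Ht'3 : t' < t) by (unfold t'; apply Rmax_lub_lt; lra).
  assert (Hp : P a b t' < al).
  { assert (Hx : D_x no_cond t t' /\ R_dist t' t < d).
    { split. split. exact I. lra. unfold R_dist. rewrite Rabs_left by lra. lra. }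
    specialize (Hcont t' Hx). simpl in Hcont. unfold R_dist in Hcont.
    pose proof (Rle_abs (P a b t' - P a b t)). lra. }
  destruct (small_beta (P a b t') al ltac:(apply H1; lra) Hp) as [be [Hbe Hobe]].
  exists be, (t - t'). split; [lra|]. split; [lra|].
  intros c Hc. replace t with (t' + (t - t')) by ring.
  eapply Rle_lt_trans. apply (H4 a c b t' (t - t')); lra.
  eapply Rle_lt_trans; [|exact Hobe].
  apply o_mono2. apply H1; lra. apply H1; lra.
  rewrite H3 by lra. lra.
Qed.

Lemma ball_open' a al t : 0 < t -> tauP_open P (pball P a al t).
Proof.
  intros Ht b Hb. unfold pball in Hb.
  destruct (ball_open a b al t Ht Hb) as (be & s & Hbe & Hs & Hi).
  exists be, s. repeat split; auto.
Qed.

Lemma closed_ball (A : X -> Prop) x : pclosed P A -> ~ A x ->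
  exists n : nat, forall y, P x y (/ (INR n + 1)) < / (INR n + 1) -> ~ A y.
Proof.
  destruct HP as (H1 & _ & H3 & _).
  intros Hcl Hx. apply NNPP. intros Hno.
  assert (Hall : forall n : nat, exists y, P x y (/ (INR n + 1)) < / (INR n + 1) /\ A y).
  { intros n. apply NNPP. intros Hne. apply Hno. exists n. intros y Hy Ay.
    apply Hne. exists y. auto. }
  set (u := fun n => proj1_sig (constructive_indefinite_description _ (Hall n))).
  assert (Hu : forall n, P x (u n) (/ (INR n + 1)) < / (INR n + 1) /\ A (u n)).
  { intros n. unfold u. destruct (constructive_indefinite_description _ (Hall n)). auto. }
  apply Hx. apply (Hcl u x). intros n; apply Hu.
  intros t Ht e He.
  destruct (inv_small (Rmin t e) ltac:(apply Rmin_glb_lt; lra)) as [N HN].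
  pose proof (Rmin_l t e). pose proof (Rmin_r t e).
  exists N. intros n Hn. unfold R_dist. rewrite Rminus_0_r.
  pose proof (inv_mono n N ltac:(lia)). pose proof (inv_pos_n n).
  rewrite Rabs_right by (apply Rle_ge, H1; lra).
  rewrite H3 by lra.
  eapply Rle_lt_trans. apply (Pmono x (u n) (/ (INR n + 1)) t); lra.
  pose proof (proj1 (Hu n)). lra.
Qed.

End S.

Theorem mainTheorem10 (X : Type) (P : X -> X -> R -> R) (o : R -> R -> R) :
  is_binop o -> binop_continuous o -> gen_param_metric P o -> P5 P ->
  forall (A : X -> Prop) (x : X), pclosed P A -> ~ A x ->
  exists U V : X -> Prop,
    tauP_open P U /\ tauP_open P V /\ U x /\ (forall y, A y -> V y) /\
    (forall y, ~ (U y /\ V y)).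
Proof.
  intros Ho Hoc HP H5 A x Hcl Hx.
  destruct (closed_ball X P o Ho HP A x Hcl Hx) as [n Hn].
  set (e := / (INR n + 1)). assert (He : 0 < e) by apply inv_pos_n.
  fold e in Hn.
  destruct (small_eta o Ho Hoc e He) as [eta [Heta Hoeta]].
  pose proof HP as (H1 & H2 & H3 & H4).
  exists (pball P x eta (e / 2)), (fun y => exists a, A a /\ P a y (e / 2) < eta).
  split. apply (ball_open' X P o Ho Hoc HP H5). lra.
  split.
  { intros y [a [Aa Hay]].
    destruct (ball_open X P o Ho Hoc HP H5 a y eta (e / 2) ltac:(lra) Hay) as (be & s & Hbe & Hs & Hi).
    exists be, s. repeat split; auto. intros b Hb. exists a. split; auto. }
  split. { unfold pball. rewrite (Pself X P o HP) by lra. lra. }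
  split. { intros y Ay. exists y. split; auto. rewrite (Pself X P o HP) by lra. lra. }
  intros y [Uy [a [Aa Hay]]]. unfold pball in Uy.
  apply (Hn a); auto.
  replace e with (e / 2 + e / 2) at 1 by field.
  eapply Rle_lt_trans. apply (H4 x a y); lra.
  eapply Rle_lt_trans; [|exact Hoeta].
  apply (o_mono o Ho); try (apply H1; lra); lra.
Qed.
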